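(* Let $R$ be a left (respectively right) Noetherian domain and let $A$ be a bijective skew PBW extension of $R$. Then $A$ is a left (respectively right) Ore domain; hence the left (respectively right) division ring of fractions of $A$ exists.
   Context: Rings are associative with identity. Skew PBW extension. Let $R$ and $A$ be rings. $A$ is a skew PBW extension of $R$, written $A=\sigma(R)\langle x_1,\dots,x_n\rangle$, if the following hold. (i) $R\subseteq A$. (ii) There are $x_1,\dots,x_n\in A$ such that $A$ is a free left $R$-module with basis $\{x_1^{\alpha_1}\cdots x_n^{\alpha_n}:\alpha\in\mathbb N^n\}$. (iii) For each $i$ and each $r\in R\setminus\{0\}$ there is $c_{i,r}\in R\setminus\{0\}$ with $x_ir-c_{i,r}x_i\in R$. (iv) For all $i,j$ there is $c_{i,j}\in R\setminus\{0\}$ with $x_jx_i-c_{i,j}x_ix_j\in R+Rx_1+\dots+Rx_n$. There are injective endomorphisms $\sigma_i$ of $R$ and $\sigma_i$-derivations $\delta_i$ with $x_ir=\sigma_i(r)x_i+\delta_i(r)$ for all $r\in R$. $A$ is bijective if all $\sigma_i$ are bijective and all $c_{i,j}$ ($i<j$) are invertible. A domain $D$ is a left Ore domain if for all $a,b\in D$ with $b\neq 0$ there exist $p\neq 0$ and $q$ in $D$ with $pa=qb$. Right Ore domains are defined symmetrically. *)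

(* Defs.v *)
From HB Require Import structures.
From mathcomp Require Import all_boot all_order all_algebra.
Set Implicit Arguments. Unset Strict Implicit. Unset Printing Implicit Defensive.
Import GRing.Theory.
Local Open Scope ring_scope.

Definition is_domain (D : nzRingType) : Prop :=
  forall a b : D, a * b = 0 -> a = 0 \/ b = 0.

Definition invertible (D : nzRingType) (c : D) : Prop :=
  exists u : D, c * u = 1 /\ u * c = 1.

Definition left_ideal (D : nzRingType) (I : D -> Prop) : Prop :=
  I 0 /\ (forall a b, I a -> I b -> I (a + b)) /\ (forall r a, I a -> I (r * a)).
Definition right_ideal (D : nzRingType) (I : D -> Prop) : Prop :=
  I 0 /\ (forall a b, I a -> I b -> I (a + b)) /\ (forall r a, I a -> I (a * r)).

Definition left_noetherian (D : nzRingType) : Prop :=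
  forall I : nat -> D -> Prop,
    (forall k, left_ideal (I k)) ->
    (forall k a, I k a -> I k.+1 a) ->
    exists N, forall m, (N <= m)%N -> forall a, I m a <-> I N a.
Definition right_noetherian (D : nzRingType) : Prop :=
  forall I : nat -> D -> Prop,
    (forall k, right_ideal (I k)) ->
    (forall k a, I k a -> I k.+1 a) ->
    exists N, forall m, (N <= m)%N -> forall a, I m a <-> I N a.

Definition left_ore_domain (D : nzRingType) : Prop :=
  is_domain D /\
  forall a b : D, b <> 0 -> exists p q : D, p <> 0 /\ p * a = q * b.
Definition right_ore_domain (D : nzRingType) : Prop :=
  is_domain D /\
  forall a b : D, b <> 0 -> exists p q : D, p <> 0 /\ a * p = b * q.

Definition monomial (A : nzRingType) (n : nat) (x : 'I_n -> A)
    (alpha : {ffun 'I_n -> nat}) : A :=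
  \prod_(i < n) x i ^+ alpha i.

(* Skew PBW extension A = sigma(R)<x_1,...,x_n>, the inclusion R ⊆ A being
   the injective ring morphism iota. *)
Definition skew_PBW (R A : nzRingType) (iota : {rmorphism R -> A}) (n : nat)
    (x : 'I_n -> A) : Prop :=
  injective iota /\
  (forall a : A, exists (s : seq {ffun 'I_n -> nat}) (c : {ffun 'I_n -> nat} -> R),
      uniq s /\ a = \sum_(alpha <- s) iota (c alpha) * monomial x alpha) /\
  (forall (s : seq {ffun 'I_n -> nat}) (c : {ffun 'I_n -> nat} -> R),
      uniq s -> \sum_(alpha <- s) iota (c alpha) * monomial x alpha = 0 ->
      forall alpha, alpha \in s -> c alpha = 0) /\
  (forall (i : 'I_n) (r : R), r <> 0 ->
      exists c d : R, c <> 0 /\ x i * iota r - iota c * x i = iota d) /\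
  (forall i j : 'I_n,
      exists (c d0 : R) (d : 'I_n -> R), c <> 0 /\
        x j * x i - iota c * x i * x j = iota d0 + \sum_(k < n) iota (d k) * x k).

(* Bijective skew PBW extension: the endomorphisms sigma_i (with
   x_i r = sigma_i(r) x_i + delta_i(r)) are bijective, and the constants
   c_{i,j} (i < j) of (iv) are invertible.  sigma_i, delta_i and c_{i,j} are
   uniquely determined by freeness, so they are quantified existentially. *)
Definition bijective_skew_PBW (R A : nzRingType) (iota : {rmorphism R -> A})
    (n : nat) (x : 'I_n -> A) : Prop :=
  skew_PBW iota x /\
  (exists sigma delta : 'I_n -> R -> R,
      (forall i r, x i * iota r = iota (sigma i r) * x i + iota (delta i r)) /\
      (forall i, bijective (sigma i))) /\
  (forall i j : 'I_n, (i < j)%N ->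
      exists (c d0 : R) (d : 'I_n -> R), invertible c /\
        x j * x i - iota c * x i * x j = iota d0 + \sum_(k < n) iota (d k) * x k).

(* Main.v *)
Require Import Defs.
From mathcomp Require Import all_boot all_order all_algebra.
From mathcomp Require Import zify.
From Stdlib Require Import ClassicalEpsilon.
Set Implicit Arguments. Unset Strict Implicit. Unset Printing Implicit Defensive.
Import GRing.Theory.
Section Monos.
Variable n : nat.
Local Notation mono := {ffun 'I_n -> nat}.
Implicit Types (g h f : mono).

Definition madd (g h : mono) : mono := [ffun k => (g k + h k)%N].
Definition m0 : mono := [ffun => 0%N].
Definition me (i : 'I_n) : mono := [ffun k => nat_of_bool (k == i)].
Definition deg (g : mono) : nat := (\sum_(k < n) g k)%N.
Definition lexlt (g h : mono) : bool :=
  [exists i : 'I_n, (g i < h i)%N && [forall k : 'I_n, (k < i)%N ==> (g k == h k)]].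
Definition ltm (g h : mono) : bool :=
  (deg g < deg h)%N || ((deg g == deg h) && lexlt g h).

Lemma maddC g h : madd g h = madd h g.
Proof. by apply/ffunP=> k; rewrite !ffunE addnC. Qed.
Lemma maddA g h k : madd g (madd h k) = madd (madd g h) k.
Proof. by apply/ffunP=> i; rewrite !ffunE addnA. Qed.
Lemma madd0m g : madd m0 g = g.
Proof. by apply/ffunP=> i; rewrite !ffunE. Qed.
Lemma maddm0 g : madd g m0 = g.
Proof. by apply/ffunP=> i; rewrite !ffunE addn0. Qed.

Lemma degD g h : deg (madd g h) = (deg g + deg h)%N.
Proof. by rewrite /deg -big_split /=; apply: eq_bigr => i _; rewrite ffunE. Qed.
Lemma deg0 : deg m0 = 0%N.
Proof. by rewrite /deg big1 // => i _; rewrite ffunE. Qed.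
Lemma deg_me i : deg (me i) = 1%N.
Proof.
rewrite /deg (bigD1 i) //= big1 ?ffunE ?eqxx // => k /negbTE nk.
by rewrite ffunE nk.
Qed.
Lemma deg_eq0 g : deg g = 0%N -> g = m0.
Proof.
move=> /eqP; rewrite /deg sum_nat_eq0 => /forallP H.
by apply/ffunP=> k; rewrite ffunE; move: (H k) => /implyP /(_ isT) /eqP.
Qed.
Lemma le_deg g k : (g k <= deg g)%N.
Proof. by rewrite /deg (bigD1 k) //= leq_addr. Qed.

Lemma lexlt_irr g : lexlt g g = false.
Proof. by apply/negbTE/existsPn=> i; rewrite ltnn. Qed.

Lemma lexlt_trans g h f : lexlt g h -> lexlt h f -> lexlt g f.
Proof.
move=> /existsP [i /andP [gi /forallP Hi]] /existsP [j /andP [hj /forallP Hj]].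
apply/existsP; case: (ltngtP i j) => [ij|ji|/val_inj ij].
- exists i; apply/andP; split.
    by move: (Hj i) => /implyP /(_ ij) /eqP <-.
  apply/forallP=> k; apply/implyP=> ki.
  move: (Hi k) (Hj k) => /implyP /(_ ki) /eqP -> /implyP.
  by move=> /(_ (ltn_trans ki ij)).
- exists j; apply/andP; split.
    by move: (Hi j) => /implyP /(_ ji) /eqP ->.
  apply/forallP=> k; apply/implyP=> kj.
  move: (Hi k) (Hj k) => /implyP /(_ (ltn_trans kj ji)) /eqP -> /implyP.
  by move=> /(_ kj).
- subst j; exists i; apply/andP; split; first exact: ltn_trans gi hj.
  apply/forallP=> k; apply/implyP=> ki.
  by move: (Hi k) (Hj k) => /implyP /(_ ki) /eqP -> /implyP /(_ ki).
Qed.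

Lemma lexlt_total g h : g != h -> lexlt g h || lexlt h g.
Proof.
move=> ngh.
have [i0 Hi0] : exists i, g i != h i.
  by apply/existsP; apply: contraR ngh => /existsPn H; apply/eqP/ffunP=> k;
     move: (H k); rewrite negbK => /eqP.
case: (@arg_minnP _ i0 (fun i => g i != h i) (fun i : 'I_n => nat_of_ord i) Hi0) => i Hi Hmin.
have Heq : forall k : 'I_n, (k < i)%N -> g k == h k.
  move=> k ki; apply: contraLR ki => Hk; rewrite -leqNgt; exact: Hmin.
case: (ltngtP (g i) (h i)) => [gh|hg|e]; last by rewrite e eqxx in Hi.
- apply/orP; left; apply/existsP; exists i; rewrite gh /=.
  by apply/forallP=> k; apply/implyP; apply: Heq.
- apply/orP; right; apply/existsP; exists i; rewrite hg /=.
  by apply/forallP=> k; apply/implyP=> ki; rewrite eq_sym; apply: Heq.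
Qed.

Lemma lexlt_add g h f : lexlt g h -> lexlt (madd g f) (madd h f).
Proof.
move=> /existsP [i /andP [gi /forallP Hi]]; apply/existsP; exists i.
rewrite !ffunE ltn_add2r gi /=; apply/forallP=> k; apply/implyP=> ki.
by rewrite !ffunE; move: (Hi k) => /implyP /(_ ki) /eqP ->.
Qed.

Lemma ltm_irr g : ltm g g = false.
Proof. by rewrite /ltm ltnn lexlt_irr andbF. Qed.

Lemma ltm_trans g h f : ltm g h -> ltm h f -> ltm g f.
Proof.
rewrite /ltm => /orP [gh|/andP [/eqP gh lgh]] /orP [hf|/andP [/eqP hf lhf]].
- by rewrite (ltn_trans gh hf).
- by rewrite -hf gh.
- by rewrite gh hf.
- by rewrite gh hf eqxx (lexlt_trans lgh lhf) orbT.
Qed.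

Lemma ltm_total g h : g != h -> ltm g h || ltm h g.
Proof.
move=> ngh; rewrite /ltm; case: (ltngtP (deg g) (deg h)) => //= e.
by rewrite ?e ?eqxx /=; apply: lexlt_total.
Qed.

Lemma ltm_add g h f : ltm g h -> ltm (madd g f) (madd h f).
Proof.
rewrite /ltm !degD ltn_add2r eqn_add2r => /orP [->//|/andP [-> l]].
by rewrite lexlt_add ?orbT.
Qed.

Lemma ltm_addl g h f : ltm g h -> ltm (madd f g) (madd f h).
Proof. by rewrite ![madd f _]maddC; apply: ltm_add. Qed.

Lemma ltm_deg g h : ltm g h -> (deg g <= deg h)%N.
Proof. by rewrite /ltm => /orP [/ltnW //|/andP [/eqP -> _]]. Qed.

Lemma deg_ltm g h : (deg g < deg h)%N -> ltm g h.
Proof. by rewrite /ltm => ->. Qed.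

Lemma ltm_neq g h : ltm g h -> g != h.
Proof. by apply: contraTneq => ->; rewrite ltm_irr. Qed.

Definition mdec (g : mono) (j : 'I_n) : mono :=
  [ffun k => if k == j then (g k).-1 else g k].

Lemma mdecK g j : (0 < g j)%N -> madd (mdec g j) (me j) = g.
Proof.
move=> gj; apply/ffunP=> k; rewrite !ffunE.
by case: eqP => [->|_]; rewrite ?addn1 ?prednK // addn0.
Qed.

Lemma deg_mdec g j : (0 < g j)%N -> deg (mdec g j) = (deg g).-1.
Proof. by move=> gj; rewrite -{2}(mdecK gj) degD deg_me addn1. Qed.

Lemma minsupp g : g != m0 ->
  exists j : 'I_n, (0 < g j)%N /\ forall k : 'I_n, (k < j)%N -> g k = 0%N.
Proof.
move=> ng.
have [i0 Hi0] : exists i, (0 < g i)%N.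
  apply/existsP; apply: contraR ng => /existsPn H; apply/eqP/ffunP=> k.
  by move: (H k); rewrite ffunE lt0n negbK => /eqP.
case: (@arg_minnP _ i0 (fun i => 0 < g i)%N (fun i : 'I_n => nat_of_ord i) Hi0) => i Hi Hmin.
exists i; split=> // k ki; apply/eqP; rewrite -leqn0 leqNgt.
by apply: contraL ki => /Hmin; rewrite -leqNgt.
Qed.

Lemma deg_le1 g : (deg g <= 1)%N -> g = m0 \/ exists k, g = me k.
Proof.
move=> dg; case: (eqVneq g m0) => [->|ng]; first by left.
right; have [j [gj _]] := minsupp ng.
exists j; have d := deg_mdec gj.
have dg1 : deg g = 1%N by move: (le_deg g j); lia.
have e0 : deg (mdec g j) = 0%N by rewrite d dg1.
by rewrite -(mdecK gj) (deg_eq0 e0) madd0m.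
Qed.

End Monos.
Lemma expn_mono a b e : (a <= b)%N -> (a ^ e <= b ^ e)%N.
Proof. by move=> ab; elim: e => [//|e IH]; rewrite !expnS leq_mul. Qed.

Lemma exp_beats d n : exists k, ((k * d).+1 ^ n < 2 ^ k)%N.
Proof.
set w := (2 * n + d + 1)%N.
have hw : (w < 2 ^ w)%N by apply: ltn_expl.
set P := (2 ^ w)%N in hw.
have hww : (w * w < P * P)%N.
  have h1 : (w * w <= P * w)%N := leq_mul (ltnW hw) (leqnn w).
  have h2 : (P * w < P * P)%N by rewrite ltn_pmul2l //; lia.
  exact: leq_ltn_trans h1 h2.
have key : ((2 * w + d) * n < 2 ^ (2 * w))%N.
  have -> : (2 ^ (2 * w) = P * P)%N by rewrite mul2n -addnn expnD.
  apply: (leq_ltn_trans _ hww); rewrite /w; nia.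
exists (2 ^ (2 * w))%N.
apply: leq_ltn_trans (_ : (2 ^ ((2 * w + d) * n) < _)%N); last by rewrite ltn_exp2l.
have -> : (2 ^ ((2 * w + d) * n) = (2 ^ (2 * w) * 2 ^ d) ^ n)%N by rewrite expnM expnD.
apply: expn_mono.
have hd : (d < 2 ^ d)%N by apply: ltn_expl.
have : (1 <= 2 ^ (2 * w))%N by rewrite expn_gt0.
move: hd; set a := (2 ^ (2 * w))%N; set b := (2 ^ d)%N; nia.
Qed.

Section Count.
Variable n : nat.
Local Notation mono := {ffun 'I_n -> nat}.

Definition ofbox m (f : {ffun 'I_n -> 'I_m.+1}) : mono := [ffun i => nat_of_ord (f i)].
Definition Smon (m : nat) : seq mono :=
  [seq h <- map (@ofbox m) (enum {ffun 'I_n -> 'I_m.+1}) | (deg h <= m)%N].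

Lemma Smon_uniq m : uniq (Smon m).
Proof.
apply: filter_uniq; rewrite map_inj_uniq ?enum_uniq // => f f' e.
apply/ffunP => i; apply: val_inj; move/ffunP: e => /(_ i); by rewrite /ofbox !ffunE.
Qed.

Lemma mem_Smon m h : (h \in Smon m) = (deg h <= m)%N.
Proof.
rewrite mem_filter; case: (leqP (deg h) m) => //= hm; apply/mapP.
exists [ffun i => (inord (h i) : 'I_m.+1)]; first by rewrite mem_enum.
apply/ffunP=> i; rewrite /ofbox !ffunE inordK // ltnS.
exact: leq_trans (le_deg h i) hm.
Qed.

Lemma size_Smon m : (size (Smon m) <= m.+1 ^ n)%N.
Proof.
rewrite size_filter; apply: leq_trans (count_size _ _) _.
by rewrite size_map -cardE card_ffun !card_ord.
Qed.

Lemma size_Smon_gt0 m : (0 < size (Smon m))%N.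
Proof.
have : m0 n \in Smon m by rewrite mem_Smon deg0.
by case: (Smon m).
Qed.

Lemma growth d : exists m, (size (Smon (m + d)) < 2 * size (Smon m))%N.
Proof.
have [k hk] := exp_beats d n.
case: (boolP [exists m : 'I_((k * d).+1), (size (Smon (m + d)) < 2 * size (Smon m))%N]).
  by move=> /existsP [m hm]; exists m.
move=> /existsPn H.
have Hk : forall j, (j <= k)%N -> (2 ^ j <= size (Smon (j * d)))%N.
  elim=> [|j IH] jk; first by rewrite mul0n expn0 size_Smon_gt0.
  have jd : (j * d < (k * d).+1)%N by rewrite ltnS leq_mul2r; apply/orP; right; apply: ltnW.
  have := H (Ordinal jd); rewrite /= -leqNgt => h.
  rewrite mulSn addnC; apply: leq_trans h.
  by rewrite expnS leq_mul2l IH ?orbT // ltnW.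
have := leq_trans (Hk k (leqnn k)) (size_Smon _).
by rewrite leqNgt hk.
Qed.
End Count.
Section LinDep.
Local Open Scope ring_scope.
Variable R : nzRingType.
Hypothesis domR : is_domain R.
Hypothesis oreR : forall a b : R, b != 0 -> exists p q : R, p != 0 /\ p * a = q * b.

Lemma mulR_neq0' (a b : R) : a != 0 -> b != 0 -> a * b != 0.
Proof. by move=> na nb; apply/eqP => /domR [] /eqP; [rewrite (negbTE na)|rewrite (negbTE nb)]. Qed.

Lemma lin_dep l : forall k (v : nat -> nat -> R), (l < k)%N ->
  (forall i j, (l <= j)%N -> v i j = 0) ->
  exists u : nat -> R, (exists i, (i < k)%N /\ u i != 0) /\
    forall j, \sum_(i < k) u i * v i j = 0.
Proof.
elim: l => [|l IH] k v lk Hv.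
  exists (fun i => if i == 0%N then 1 else 0); split.
    by exists 0%N; split=> //; rewrite eqxx oner_neq0.
  by move=> j; rewrite big1 // => i _; rewrite Hv // mulr0.
case: (boolP [exists i : 'I_k, v i l != 0]) => [/existsP [i0 Hi0]|/existsPn H0].
  case: k lk i0 Hi0 => [//|k] lk i0 Hi0.
  have Ho : forall i, exists pq : R * R, (pq.1 != 0) && (pq.1 * v (bump i0 i) l == pq.2 * v i0 l).
    move=> i; have [p [q [np e]]] := oreR (v (bump i0 i) l) Hi0.
    by exists (p, q); rewrite np e eqxx.
  pose p i := (xchoose (Ho i)).1.
  pose q i := (xchoose (Ho i)).2.
  have Hpq : forall i, p i != 0 /\ p i * v (bump i0 i) l = q i * v i0 l.
    by move=> i; have /andP [? /eqP ?] := xchooseP (Ho i).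
  pose w i j := p i * v (bump i0 i) j - q i * v i0 j.
  have Hw : forall i j, (l <= j)%N -> w i j = 0.
    move=> i j; rewrite leq_eqVlt => /orP [/eqP e|lj].
      by rewrite /w /= -e (proj2 (Hpq i)); apply/eqP; rewrite subr_eq0.
    by rewrite /w /= !Hv // ?ltnW // !mulr0 subr0.
  have [u' [[i1 [i1k nu1]] Hu']] := IH k w lk Hw.
  pose u i := if i == nat_of_ord i0 then - \sum_(i' < k) u' i' * q i'
              else u' (unbump i0 i) * p (unbump i0 i).
  exists u; split.
    exists (bump i0 i1); split.
      by move: i1k; rewrite /bump; case: (i0 <= i1)%N => /=; lia.
    rewrite /u [bump _ _ == _]eq_sym (negbTE (neq_bump _ _)) bumpK.
    by apply: mulR_neq0' => //; case: (Hpq i1).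
  move=> j; rewrite (bigD1_ord i0) //=.
  rewrite /u eqxx.
  have -> : \sum_(i < k) (if bump i0 i == i0 then - \sum_(i' < k) u' i' * q i'
              else u' (unbump i0 (bump i0 i)) * p (unbump i0 (bump i0 i))) *
              v (bump i0 i) j = \sum_(i < k) u' i * p i * v (bump i0 i) j.
    by apply: eq_bigr => i _; rewrite eq_sym (negbTE (neq_bump _ _)) bumpK.
  rewrite mulNr mulr_suml.
  have := Hu' j; rewrite /w.
  under eq_bigr => i _ do rewrite mulrBr !mulrA.
  rewrite sumrB => /eqP; rewrite subr_eq0 => /eqP ->.
  by rewrite addNr.
pose v' i j := if (l <= j)%N then 0 else v i j.
have Hv' : forall i j, (l <= j)%N -> v' i j = 0 by move=> i j lj; rewrite /v' lj.
have [u [nu Hu]] := IH k v' (ltnW lk) Hv'.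
exists u; split=> // j; rewrite -[RHS](Hu j); apply: eq_bigr => i _; congr (_ * _); rewrite /v'.
case: (ltngtP l j) => [lj|jl|e] /=; [by rewrite Hv|by []|].
by move: (H0 i); rewrite negbK e => /eqP.
Qed.
End LinDep.
Section Core.
Local Open Scope ring_scope.
Variables (R A : nzRingType) (iota : R -> A) (n : nat) (x : 'I_n -> A).
Variable mon : {ffun 'I_n -> nat} -> A.
Variables sig del : 'I_n -> R -> R.
Local Notation mono := {ffun 'I_n -> nat}.
Implicit Types (g h f : mono).

Hypothesis iotaD : forall r s, iota (r + s) = iota r + iota s.
Hypothesis iotaM : forall r s, iota (r * s) = iota r * iota s.
Hypothesis iota1 : iota 1 = 1.

Lemma iota0 : iota 0 = 0.
Proof. have h := iotaD 0 0; rewrite addr0 in h. by apply: (addrI (iota 0)); rewrite -h addr0. Qed.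
Lemma iotaN r : iota (- r) = - iota r.
Proof. by apply/eqP; rewrite -subr_eq0 opprK -iotaD addNr iota0. Qed.
Lemma iota_sum (I : Type) (s : seq I) (P : pred I) (F : I -> R) :
  iota (\sum_(i <- s | P i) F i) = \sum_(i <- s | P i) iota (F i).
Proof. exact: (big_morph iota iotaD iota0). Qed.

Definition spanP (P : mono -> Prop) (a : A) :=
  exists s : seq (R * mono), (forall p, p \in s -> P p.2) /\
    a = \sum_(p <- s) iota p.1 * mon p.2.

Lemma span0 P : spanP P 0.
Proof. by exists [::]; rewrite big_nil. Qed.

Lemma spanD P a b : spanP P a -> spanP P b -> spanP P (a + b).
Proof.
move=> [s1 [H1 ->]] [s2 [H2 ->]]; exists (s1 ++ s2); split; last by rewrite big_cat.
by move=> p; rewrite mem_cat => /orP [/H1|/H2].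
Qed.

Lemma spanN P a : spanP P a -> spanP P (- a).
Proof.
move=> [s [H ->]]; exists [seq (- p.1, p.2) | p <- s]; split.
  by move=> p /mapP [q /H qs ->].
by rewrite big_map -sumrN; apply: eq_bigr => p _; rewrite /= iotaN mulNr.
Qed.

Lemma spanB P a b : spanP P a -> spanP P b -> spanP P (a - b).
Proof. by move=> ha hb; apply: spanD => //; apply: spanN. Qed.

Lemma span_sum P (I : eqType) (r : seq I) (F : I -> A) :
  (forall i, i \in r -> spanP P (F i)) -> spanP P (\sum_(i <- r) F i).
Proof.
elim: r => [|i r IH] H; first by rewrite big_nil; apply: span0.
rewrite big_cons; apply: spanD; first by apply: H; rewrite inE eqxx.
by apply: IH => j hj; apply: H; rewrite inE hj orbT.
Qed.

Lemma span_term P r g : P g -> spanP P (iota r * mon g).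
Proof. by move=> Pg; exists [:: (r, g)]; rewrite big_seq1; split=> // p; rewrite inE => /eqP ->. Qed.

Lemma span_mono (P Q : mono -> Prop) a : (forall g, P g -> Q g) -> spanP P a -> spanP Q a.
Proof. by move=> PQ [s [H ->]]; exists s; split=> // p /H /PQ. Qed.

Lemma span_iotaL P r a : spanP P a -> spanP P (iota r * a).
Proof.
move=> [s [H ->]]; exists [seq (r * p.1, p.2) | p <- s]; split.
  by move=> p /mapP [q /H qs ->].
by rewrite big_map mulr_sumr; apply: eq_bigr => p _; rewrite /= iotaM mulrA.
Qed.

Lemma span_mull (P Q : mono -> Prop) (y a : A) :
  (forall r g, P g -> spanP Q (y * (iota r * mon g))) -> spanP P a -> spanP Q (y * a).
Proof.
move=> H [s [Hs ->]]; rewrite mulr_sumr; apply: span_sum => p hp.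
by apply: H; apply: Hs.
Qed.

Lemma span_mulr (P Q : mono -> Prop) (y a : A) :
  (forall r g, P g -> spanP Q ((iota r * mon g) * y)) -> spanP P a -> spanP Q (a * y).
Proof.
move=> H [s [Hs ->]]; rewrite mulr_suml; apply: span_sum => p hp.
by apply: H; apply: Hs.
Qed.

Definition coef (s : seq (R * mono)) h : R := \sum_(p <- s | p.2 == h) p.1.

Lemma coords (S : seq mono) (s : seq (R * mono)) : uniq S ->
  (forall p, p \in s -> p.2 \in S) ->
  \sum_(p <- s) iota p.1 * mon p.2 = \sum_(h <- S) iota (coef s h) * mon h.
Proof.
move=> uS; elim: s => [|q s IH] H.
  by rewrite big_nil big1 // => h _; rewrite /coef big_nil iota0 mul0r.
rewrite big_cons IH; last by move=> p ps; apply: H; rewrite inE ps orbT.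
have qS : q.2 \in S by apply: H; rewrite inE eqxx.
rewrite [in RHS](eq_bigr (fun h => iota (if q.2 == h then q.1 else 0) * mon h
                                   + iota (coef s h) * mon h)); last first.
  by move=> h _; rewrite /coef big_cons; case: eqP => _; rewrite ?iota0 ?mul0r ?add0r // iotaD mulrDl.
rewrite big_split /=; congr (_ + _).
rewrite (bigD1_seq q.2) //= eqxx big1 ?addr0 // => h /negbTE.
by rewrite eq_sym => ->; rewrite iota0 mul0r.
Qed.

Hypothesis indep : forall (s : seq mono) (c : mono -> R), uniq s ->
  \sum_(al <- s) iota (c al) * mon al = 0 -> forall al, al \in s -> c al = 0.

Lemma coef_zero r g a : spanP (fun h => h != g) a -> iota r * mon g + a = 0 -> r = 0.
Proof.
move=> [s [Hs ->]] H.
set S := undup (g :: [seq p.2 | p <- s]).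
have Hin : forall p, p \in (r, g) :: s -> p.2 \in S.
  move=> p; rewrite mem_undup inE => /orP [/eqP ->|ps]; first by rewrite inE eqxx.
  by rewrite inE; apply/orP; right; apply/mapP; exists p.
have HC := coords (undup_uniq _) Hin.
rewrite big_cons in HC.
change (iota r * mon g + \sum_(p <- s) iota p.1 * mon p.2 = \sum_(h <- S) iota (coef ((r, g) :: s) h) * mon h) in HC.
rewrite H in HC.
have gS : g \in S by rewrite mem_undup inE eqxx.
have := indep (undup_uniq _) (esym HC) gS.
rewrite /coef big_cons /= eqxx.
rewrite big1_seq ?addr0 // => p /andP [/eqP e ps]; move: (Hs p ps); rewrite e eqxx //.
Qed.

Lemma max_exists (S : seq mono) : S != [::] ->
  exists2 a, a \in S & forall h, h \in S -> h != a -> ltm h a.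
Proof.
elim: S => [//|h0 S IH] _.
case: (eqVneq S [::]) => [->|nS].
  by exists h0; rewrite ?inE ?eqxx // => h; rewrite inE => ->.
have [a aS Ha] := IH nS.
case: (eqVneq h0 a) => [e|nh].
  exists a; first by rewrite inE aS orbT.
  move=> h; rewrite inE => /orP [/eqP ->|/Ha //]; by rewrite e eqxx.
case/orP: (ltm_total nh) => lt.
  exists a; first by rewrite inE aS orbT.
  by move=> h; rewrite inE => /orP [/eqP ->//|/Ha].
exists h0; first by rewrite inE eqxx.
move=> h; rewrite inE => /orP [/eqP -> //|hS nh0]; first by rewrite eqxx.
case: (eqVneq h a) => [->//|nha]; exact: ltm_trans (Ha h hS nha) lt.
Qed.

Definition lower g := spanP (fun h => ltm h g).

Lemma leading P a : a != 0 -> spanP P a ->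
  exists r g L, [/\ r != 0, P g, lower g L & a = iota r * mon g + L].
Proof.
move=> na [s [Hs ea]].
set S := undup [seq p.2 | p <- s].
have ea' : a = \sum_(h <- S) iota (coef s h) * mon h.
  rewrite ea; apply: coords; first exact: undup_uniq.
  by move=> p ps; rewrite mem_undup; apply/mapP; exists p.
set S' := [seq h <- S | coef s h != 0].
have ea2 : a = \sum_(h <- S') iota (coef s h) * mon h.
  rewrite ea' big_filter [in RHS]big_mkcond /=; apply: eq_bigr => h _.
  by case: eqP => // ->; rewrite iota0 mul0r.
have nS' : S' != [::].
  by apply: contra na => /eqP e; rewrite ea2 e big_nil.
have [al alS Hal] := max_exists nS'.
have uS' : uniq S' by apply: filter_uniq; apply: undup_uniq.
exists (coef s al), al, (\sum_(h <- S' | h != al) iota (coef s h) * mon h); split.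
- by move: alS; rewrite mem_filter => /andP [].
- move: alS; rewrite mem_filter mem_undup => /andP [_ /mapP [p ps ->]]; exact: Hs.
- rewrite -big_filter; apply: span_sum => h.
  by rewrite mem_filter => /andP [nh hS]; apply: span_term; apply: Hal.
- by rewrite ea2 (bigD1_seq al).
Qed.


Hypothesis monS : forall (i : 'I_n) g, (forall k : 'I_n, (k < i)%N -> g k = 0%N) ->
  x i * mon g = mon (madd g (me i)).
Hypothesis mon0 : mon (m0 n) = 1.
Hypothesis rel3 : forall i r, x i * iota r = iota (sig i r) * x i + iota (del i r).
Hypothesis sig_inj : forall i, injective (sig i).
Hypothesis domR : is_domain R.
Hypothesis rel4 : forall i j : 'I_n, (j < i)%N -> exists c, c != 0 /\
  spanP (fun g => (deg g <= 1)%N) (x i * x j - iota c * (x j * x i)).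

Lemma mon_me k : mon (me k) = x k.
Proof.
have H : forall kk : 'I_n, (kk < k)%N -> m0 n kk = 0%N by move=> kk _; rewrite ffunE.
have := monS H.
by rewrite mon0 mulr1 madd0m.
Qed.

Lemma x_iota j r (m : A) : x j * (iota r * m) = iota (sig j r) * (x j * m) + iota (del j r) * m.
Proof. by rewrite mulrA rel3 mulrDl !mulrA. Qed.

Lemma me_neq0 k : me k != m0 n.
Proof. by apply/eqP => e; have := deg_me k; rewrite e deg0. Qed.

Lemma sig0 i : sig i 0 = 0.
Proof.
have := rel3 i 0; rewrite iota0 mulr0 -mon_me -[iota (del i 0)]mulr1 -mon0 => /esym H.
apply: (coef_zero _ H); apply: span_term; rewrite eq_sym; exact: me_neq0.
Qed.

Lemma sig_neq0 i r : r != 0 -> sig i r != 0.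
Proof. by apply: contra => /eqP e; apply/eqP; apply: (@sig_inj i r 0); rewrite e sig0. Qed.

Lemma mulR_neq0 (a b : R) : a != 0 -> b != 0 -> a * b != 0.
Proof. by move=> na nb; apply/eqP => /domR [] /eqP; [rewrite (negbTE na)|rewrite (negbTE nb)]. Qed.

Definition CL g i := exists c L, [/\ c != 0, lower (madd g (me i)) L &
  x i * mon g = iota c * mon (madd g (me i)) + L].

Lemma ltm_me h j : ltm h (madd h (me j)).
Proof. by apply: deg_ltm; rewrite degD deg_me addn1. Qed.

Lemma XLgen j h L : (forall d, ltm d h -> CL d j) -> lower h L ->
  lower (madd h (me j)) (x j * L).
Proof.
move=> H; apply: span_mull => r d dh.
have [c [L' [nc HL' e]]] := H d dh.
rewrite x_iota e mulrDr mulrA -iotaM.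
apply: spanD; first apply: spanD.
- by apply: span_term; apply: ltm_add.
- apply: span_iotaL; apply: span_mono HL' => z zd.
  exact: ltm_trans zd (ltm_add _ dh).
- by apply: span_term; apply: ltm_trans dh (ltm_me _ _).
Qed.

Lemma claim_all g i : CL g i.
Proof.
move: {2}(deg g * n + i)%N.+1 (ltnSn (deg g * n + i)) => N.
elim: N g i => [//|N IH] g i HN.
case: (boolP [forall k : 'I_n, (k < i)%N ==> (g k == 0%N)]) => [/forallP H|H].
  exists 1, 0; split; [exact: oner_neq0 | exact: span0 |].
  rewrite iota1 mul1r addr0; apply: monS => k ki.
  by move: (H k) => /implyP /(_ ki) /eqP.
have [k0 /andP [k0i gk0]] : exists k : 'I_n, (k < i)%N && (g k != 0%N).
  move: H; rewrite negb_forall => /existsP [k]; rewrite negb_imply => ?; by exists k.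
have ng : g != m0 n.
  by apply: contra gk0 => /eqP ->; rewrite ffunE.
have [j [gj Hj]] := minsupp ng.
have ji : (j < i)%N.
  case: (ltnP j k0) => [jk|kj]; first exact: ltn_trans jk k0i.
  by rewrite leq_eqVlt in kj; case/orP: kj => [/eqP e|/Hj e]; [rewrite -(val_inj e)|move: gk0; rewrite e].
set g' := mdec g j.
have eg : g = madd g' (me j) by rewrite mdecK.
have Hg' : forall k : 'I_n, (k < j)%N -> g' k = 0%N.
  by move=> k kj; rewrite /g' ffunE; case: eqP => [e|_]; [move: kj; rewrite e ltnn|exact: Hj].
have dg' : deg g = (deg g').+1 by rewrite eg degD deg_me addn1.
have emon : mon g = x j * mon g' by rewrite (monS Hg') -eg.
have [c0 [nc0 [S1 [HS1 eS1]]]] : exists c0, c0 != 0 /\ exists S1,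
    spanP (fun g => (deg g <= 1)%N) S1 /\ x i * x j = iota c0 * (x j * x i) + S1.
  have [c0 [nc0 HS]] := rel4 ji; exists c0; split=> //.
  by exists (x i * x j - iota c0 * (x j * x i)); split=> //; rewrite addrC subrK.
have IH1 : CL g' i by apply: IH; rewrite dg' in HN; move: HN (ltn_ord i); nia.
have [c1 [L1 [nc1 HL1 e1]]] := IH1.
set h := madd g' (me i).
have Hh : forall k : 'I_n, (k < j)%N -> h k = 0%N.
  move=> k kj; rewrite /h ffunE Hg' // ffunE; case: eqP => // e.
  by move: kj; rewrite e => /(ltn_trans ji); rewrite ltnn.
have eH : madd h (me j) = madd g (me i).
  by rewrite /h -maddA (maddC (me i)) maddA -eg.
have XL1 : lower (madd g (me i)) (x j * L1).
  rewrite -eH; apply: XLgen HL1 => d dh; apply: IH.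
  have := ltm_deg dh; rewrite /h degD deg_me addn1 -dg' => dd.
  move: HN; nia.
have SL : lower (madd g (me i)) (S1 * mon g').
  apply: span_mulr HS1 => r f /deg_le1 [->|[k ->]].
    rewrite mon0 mulr1; apply: span_term; apply: deg_ltm.
    by rewrite degD deg_me dg'; lia.
  rewrite mon_me -mulrA.
  have [c [L [_ HL e]]] : CL g' k.
    by apply: IH; rewrite dg' in HN; move: HN (ltn_ord k); nia.
  rewrite e mulrDr mulrA -iotaM; apply: spanD.
    by apply: span_term; apply: deg_ltm; rewrite !degD !deg_me dg'.
  apply: span_iotaL; apply: span_mono HL => z /ltm_deg dz; apply: deg_ltm.
  by move: dz; rewrite !degD !deg_me dg'; lia.
exists (c0 * sig j c1), (iota c0 * (iota (del j c1) * mon h + x j * L1) + S1 * mon g').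
split.
- by apply: mulR_neq0 => //; apply: sig_neq0.
- apply: spanD => //; apply: span_iotaL; apply: spanD => //.
  by apply: span_term; rewrite -eH; apply: ltm_me.
rewrite emon mulrA eS1 mulrDl -!mulrA e1 mulrDr x_iota (monS Hh) eH.
rewrite iotaM -(addrA (iota (sig j c1) * _)) mulrDr mulrA -addrA.
by [].
Qed.
Lemma XL j h L : lower h L -> lower (madd h (me j)) (x j * L).
Proof. by apply: XLgen => d _; apply: claim_all. Qed.

Lemma mon_dec al : al != m0 n -> exists j al',
  [/\ al = madd al' (me j), deg al = (deg al').+1 & mon al = x j * mon al'].
Proof.
move=> nal; have [j [gj Hj]] := minsupp nal.
set al' := mdec al j.
have eg : al = madd al' (me j) by rewrite mdecK.
have Hg' : forall k : 'I_n, (k < j)%N -> al' k = 0%N.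
  by move=> k kj; rewrite /al' ffunE; case: eqP => [e|_]; [move: kj; rewrite e ltnn|exact: Hj].
exists j, al'; split=> //; first by rewrite {1}eg degD deg_me addn1.
by rewrite (monS Hg') -eg.
Qed.

Lemma Kmul al be r : exists t L, [/\ r != 0 -> t != 0, lower (madd al be) L &
  mon al * (iota r * mon be) = iota t * mon (madd al be) + L].
Proof.
move: {2}(deg al).+1 (ltnSn (deg al)) => N.
elim: N al => [//|N IH] al HN.
case: (eqVneq al (m0 n)) => [->|nal].
  exists r, 0; split=> //; first exact: span0.
  by rewrite mon0 mul1r madd0m addr0.
have [j [al' [eal dal emon]]] := mon_dec nal.
have [t' [L' [nt' HL' e']]] : exists t L, [/\ r != 0 -> t != 0, lower (madd al' be) L &
  mon al' * (iota r * mon be) = iota t * mon (madd al' be) + L].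
  by apply: IH; move: HN; rewrite dal; lia.
have [c [L'' [nc HL'' e'']]] := claim_all (madd al' be) j.
have eab : madd (madd al' be) (me j) = madd al be.
  by rewrite eal -maddA (maddC be) maddA.
exists (sig j t' * c), (iota (sig j t') * L'' + iota (del j t') * mon (madd al' be) + x j * L').
split.
- by move=> /nt' ?; apply: mulR_neq0 => //; apply: sig_neq0.
- apply: spanD; first apply: spanD.
  + by apply: span_iotaL; rewrite -eab.
  + by apply: span_term; rewrite -eab; apply: ltm_me.
  + by rewrite -eab; apply: XL.
rewrite emon -mulrA e' mulrDr x_iota e'' eab mulrDr mulrA -iotaM.
by rewrite !addrA.
Qed.

Definition leP g h := (g == h) || ltm g h.

Lemma leP_ltm_trans g h f : leP g h -> ltm h f -> ltm g f.
Proof. by move=> /orP [/eqP ->//|gh] hf; apply: ltm_trans gh hf. Qed.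

Lemma lt_le_add g a h b : ltm g a -> leP h b -> ltm (madd g h) (madd a b).
Proof.
move=> ga /orP [/eqP ->|hb]; first exact: ltm_add.
exact: ltm_trans (ltm_add _ ga) (ltm_addl _ hb).
Qed.

Lemma Mul (P Q : mono -> Prop) a b : spanP P a -> spanP Q b ->
  spanP (fun k => exists g h, [/\ P g, Q h & leP k (madd g h)]) (a * b).
Proof.
move=> Ha [s [Hs ->]]; apply: span_mulr Ha => r g Pg.
rewrite mulr_sumr; apply: span_sum => p ps.
have [t [L [_ HL e]]] := Kmul g p.2 p.1.
rewrite -mulrA e mulrDr mulrA -iotaM; apply: spanD.
  by apply: span_term; exists g, p.2; split=> //; [exact: Hs|rewrite /leP eqxx].
apply: span_iotaL; apply: span_mono HL => z zl; exists g, p.2; split=> //; first exact: Hs.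
by rewrite /leP zl orbT.
Qed.

Hypothesis gen : forall a : A, spanP (fun _ => True) a.

Lemma domA : is_domain A.
Proof.
move=> a b ab; case: (eqVneq a 0) => [->|na]; first by left.
case: (eqVneq b 0) => [->|nb]; first by right.
exfalso.
have [r [al [La [nr _ HLa ea]]]] := leading na (gen a).
have [s [be [Lb [ns _ HLb eb]]]] := leading nb (gen b).
have [t [L [nt HL eK]]] := Kmul al be s.
have E : a * b = iota (r * t) * mon (madd al be) +
   (iota r * L + (iota r * mon al) * Lb + La * b).
  rewrite {1}ea {1}eb mulrDl mulrDr -mulrA eK mulrDr mulrA -iotaM.
  by rewrite -eb !addrA.
have Hb : spanP (fun h => leP h be) b.
  rewrite eb; apply: spanD; first by apply: span_term; rewrite /leP eqxx.
  by apply: span_mono HLb => z zb; rewrite /leP zb orbT.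
have Hrest : lower (madd al be) (iota r * L + (iota r * mon al) * Lb + La * b).
  apply: spanD; first apply: spanD.
  - exact: span_iotaL.
  - have Ha1 : spanP (fun g => g = al) (iota r * mon al) by apply: span_term.
    apply: span_mono (Mul Ha1 HLb) => k [g [h [-> hb kgh]]].
    exact: leP_ltm_trans kgh (ltm_addl _ hb).
  - apply: span_mono (Mul HLa Hb) => k [g [h [ga hb kgh]]].
    exact: leP_ltm_trans kgh (lt_le_add ga hb).
have := coef_zero (span_mono (fun z => @ltm_neq _ z _) Hrest) (etrans (esym E) ab).
by apply/eqP; apply: mulR_neq0 => //; apply: nt.
Qed.
Hypothesis oreR : forall a b : R, b != 0 -> exists p q : R, p != 0 /\ p * a = q * b.

Lemma deg_bound a : exists d, spanP (fun g => (deg g <= d)%N) a.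
Proof.
have [s [_ ->]] := gen a.
have [d Hd] : exists d, forall p, p \in s -> (deg p.2 <= d)%N.
  elim: s => [|p s [d IH]]; first by exists 0%N.
  exists (maxn (deg p.2) d) => q; rewrite inE => /orP [/eqP ->|/IH]; first exact: leq_maxl.
  by move=> h; apply: leq_trans h (leq_maxr _ _).
by exists d, s; split.
Qed.

Lemma leP_deg g h : leP g h -> (deg g <= deg h)%N.
Proof. by move=> /orP [/eqP ->//|/ltm_deg]. Qed.

Lemma Smon_coords D y : spanP (fun g => (deg g <= D)%N) y ->
  exists c : mono -> R, y = \sum_(h <- Smon n D) iota (c h) * mon h.
Proof.
move=> [s [Hs ->]]; exists (coef s); apply: coords; first exact: Smon_uniq.
by move=> p ps; rewrite mem_Smon; apply: Hs.
Qed.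

Lemma zero_coords (T : seq mono) (w : nat -> R) : uniq T ->
  \sum_(i < size T) iota (w i) * mon (nth (m0 n) T i) = 0 ->
  forall i, (i < size T)%N -> w i = 0.
Proof.
move=> uT H i iT.
have E : \sum_(h <- T) iota (w (index h T)) * mon h = 0.
  rewrite (big_nth (m0 n)) big_mkord -[RHS]H; apply: eq_bigr => j _.
  by rewrite index_uniq.
have := indep uT E (mem_nth (m0 n) iT).
by rewrite index_uniq.
Qed.

Theorem core_left : left_ore_domain A.
Proof.
split; first exact: domA.
move=> a b nb.
case: (eqVneq a 0) => [->|na].
  by exists 1, 0; split; [apply/eqP; exact: oner_neq0 | rewrite mulr0 mul0r].
have [da Ha] := deg_bound a.
have [db Hb] := deg_bound b.
set d := maxn da db.
have Ha' : spanP (fun g => (deg g <= d)%N) a.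
  by apply: span_mono Ha => g h; apply: leq_trans h (leq_maxl _ _).
have Hb' : spanP (fun g => (deg g <= d)%N) b.
  by apply: span_mono Hb => g h; apply: leq_trans h (leq_maxr _ _).
have [m hm] := growth n d.
set T := Smon n m; set S := Smon n (m + d); set NT := size T.
pose el (i : nat) := if (i < NT)%N then mon (nth (m0 n) T i) * a
                     else mon (nth (m0 n) T (i - NT)) * b.
have Hel : forall i, exists c : mono -> R, el i = \sum_(h <- S) iota (c h) * mon h.
  move=> i; apply: Smon_coords.
  have HT : forall j, spanP (fun g => (deg g <= m)%N) (iota 1 * mon (nth (m0 n) T j)).
    move=> j; case: (ltnP j NT) => jT.
      by apply: span_term; rewrite -mem_Smon; apply: mem_nth.
    by rewrite nth_default //; apply: span_term; rewrite deg0.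
  have Hy : forall y j, spanP (fun g => (deg g <= d)%N) y ->
      spanP (fun g => (deg g <= m + d)%N) (mon (nth (m0 n) T j) * y).
    move=> y j Hy; have := Mul (HT j) Hy; rewrite iota1 mul1r.
    apply: span_mono => k [g [h [dg dh /leP_deg]]]; rewrite degD => kg.
    by apply: leq_trans kg _; apply: leq_add.
  by rewrite /el; case: ifP => _; apply: Hy.
pose cf i := proj1_sig (constructive_indefinite_description _ (Hel i)).
have Hcf : forall i, el i = \sum_(h <- S) iota (cf i h) * mon h.
  by move=> i; rewrite /cf; case: constructive_indefinite_description.
pose v i j := if (j < size S)%N then cf i (nth (m0 n) S j) else 0.
have Hv : forall i j, (size S <= j)%N -> v i j = 0.
  by move=> i j; rewrite /v leqNgt => /negbTE ->.
have lk : (size S < NT + NT)%N by rewrite addnn -mul2n.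
have [u [[i0 [i0k nu0]] Hu]] := lin_dep domR oreR lk Hv.
pose p := \sum_(i < NT) iota (u i) * mon (nth (m0 n) T i).
pose q := - \sum_(i < NT) iota (u (NT + i)%N) * mon (nth (m0 n) T i).
have key : p * a - q * b = 0.
  have E1 : p * a - q * b = \sum_(i < NT + NT) iota (u i) * el i.
    rewrite big_split_ord /= /p /q mulNr opprK !mulr_suml.
    congr (_ + _); apply: eq_bigr => i _; rewrite /el -mulrA.
      by rewrite ltn_ord.
    by rewrite ltnNge leq_addr /= addKn.
  rewrite E1.
  under eq_bigr => i _ do rewrite Hcf mulr_sumr.
  rewrite exchange_big /=.
  rewrite (big_nth (m0 n)) big_mkord big1 // => j _.
  under eq_bigr => i _ do rewrite mulrA -iotaM.
  rewrite -mulr_suml -iota_sum.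
  have -> : \sum_(i < NT + NT) u i * cf i (nth (m0 n) S j) = 0.
    rewrite -[RHS](Hu j); apply: eq_bigr => i _; by rewrite /v ltn_ord.
  by rewrite iota0 mul0r.
have epq : p * a = q * b by apply/eqP; rewrite -subr_eq0 key.
have np : p != 0.
  apply/negP => /eqP p0.
  have qb : q * b = 0 by rewrite -epq p0 mul0r.
  have q0 : q = 0 by case: (domA qb) => // b0; move: nb; rewrite b0 eqxx.
  have Hu1 := zero_coords (Smon_uniq n m) p0.
  have q0' : \sum_(i < NT) iota (u (NT + i)%N) * mon (nth (m0 n) T i) = 0.
    by apply/eqP; rewrite -oppr_eq0; apply/eqP.
  have Hu2 := zero_coords (w := fun i => u (NT + i)%N) (Smon_uniq n m) q0'.
  case: (ltnP i0 NT) => h.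
    by move: nu0; rewrite Hu1 ?eqxx.
  have e : i0 = (NT + (i0 - NT))%N by rewrite subnKC.
  move: nu0; rewrite e Hu2 ?eqxx //.
  by move: i0k h; rewrite /NT /T; lia.
by exists p, q; split=> //; apply/eqP.
Qed.

Lemma MR1 al r : exists t L, [/\ r != 0 -> t != 0, lower al L &
  mon al * iota r = iota t * mon al + L].
Proof.
have [t [L [nt HL e]]] := Kmul al (m0 n) r.
exists t, L; split=> //; first by rewrite maddm0 in HL.
by rewrite mon0 mulr1 maddm0 in e.
Qed.

Lemma right_indep (s : seq mono) (c : mono -> R) : uniq s ->
  \sum_(al <- s) mon al * iota (c al) = 0 -> forall al, al \in s -> c al = 0.
Proof.
move=> us H al als; apply/eqP; apply/negP => /negP nc.
set s' := [seq g <- s | c g != 0].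
have H' : \sum_(g <- s') mon g * iota (c g) = 0.
  rewrite -[RHS]H big_filter [in LHS]big_mkcond /=; apply: eq_bigr => g _.
  by case: eqP => // ->; rewrite iota0 mulr0.
have ns' : s' != [::].
  have : al \in s' by rewrite mem_filter nc als.
  by case: (s').
have [a0 a0s Ha0] := max_exists ns'.
have us' : uniq s' by apply: filter_uniq.
rewrite (bigD1_seq a0) //= in H'.
have [t [L [nt HL e]]] := MR1 a0 (c a0).
have nc0 : c a0 != 0 by move: a0s; rewrite mem_filter => /andP [].
rewrite e -addrA in H'.
have Hrest : lower a0 (L + \sum_(i <- s' | i != a0) mon i * iota (c i)).
  apply: spanD => //; rewrite -big_filter; apply: span_sum => g.
  rewrite mem_filter => /andP [ng gs].
  have [t' [L' [_ HL' e']]] := MR1 g (c g); rewrite e'.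
  have ga := Ha0 g gs ng.
  apply: spanD; first exact: span_term.
  by apply: span_mono HL' => z zg; apply: ltm_trans zg ga.
have := coef_zero (span_mono (fun z => @ltm_neq _ z _) Hrest) H'.
by move=> t0; move: (nt nc0); rewrite t0 eqxx.
Qed.

Definition RS (a : A) := exists s : seq (R * mono), a = \sum_(p <- s) mon p.2 * iota p.1.

Lemma RS0 : RS 0. Proof. by exists [::]; rewrite big_nil. Qed.
Lemma RSD a b : RS a -> RS b -> RS (a + b).
Proof. by move=> [s1 ->] [s2 ->]; exists (s1 ++ s2); rewrite big_cat. Qed.
Lemma RSN a : RS a -> RS (- a).
Proof.
move=> [s ->]; exists [seq (- p.1, p.2) | p <- s].
by rewrite big_map -sumrN; apply: eq_bigr => p _; rewrite /= iotaN mulrN.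
Qed.
Lemma RS_sum (I : eqType) (r : seq I) (F : I -> A) :
  (forall i, i \in r -> RS (F i)) -> RS (\sum_(i <- r) F i).
Proof.
elim: r => [|i r IH] H; first by rewrite big_nil; apply: RS0.
rewrite big_cons; apply: RSD; first by apply: H; rewrite inE eqxx.
by apply: IH => j hj; apply: H; rewrite inE hj orbT.
Qed.
Lemma RS_term r g : RS (mon g * iota r).
Proof. by exists [:: (r, g)]; rewrite big_seq1. Qed.

Hypothesis sig_bij : forall i, bijective (sig i).

Lemma MR2 al r' : exists r L, spanP (fun g => (deg g < deg al)%N) L /\
  mon al * iota r = iota r' * mon al + L.
Proof.
move: {2}(deg al).+1 (ltnSn (deg al)) => N.
elim: N al r' => [//|N IH] al r' HN.
case: (eqVneq al (m0 n)) => [->|nal].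
  by exists r', 0; split; [apply: span0 | rewrite mon0 mul1r mulr1 addr0].
have [j [al' [eal dal emon]]] := mon_dec nal.
have [si sK siK] := sig_bij j.
have [r [L' [HL' e']]] : exists r L, spanP (fun g => (deg g < deg al')%N) L /\
  mon al' * iota r = iota (si r') * mon al' + L.
  by apply: IH; move: HN; rewrite dal; lia.
exists r, (iota (del j (si r')) * mon al' + x j * L'); split.
  apply: spanD; first by apply: span_term; rewrite dal.
  have Hx : spanP (fun g => g = me j) (x j) by rewrite -mon_me -[mon _]mul1r -iota1; apply: span_term.
  apply: span_mono (Mul Hx HL') => k [g [h [-> dh /leP_deg]]].
  by rewrite degD deg_me dal; lia.
by rewrite emon -mulrA e' mulrDr x_iota siK -emon addrA.
Qed.

Lemma right_gen a : RS a.
Proof.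
have [d Hd] := deg_bound a.
have : spanP (fun g => (deg g < d.+1)%N) a by apply: span_mono Hd.
clear Hd; move: d.+1 a => N; elim: N => [|N IH] a [s [Hs ->]].
  by case: s Hs => [|p s] Hs; [rewrite big_nil; apply: RS0|move: (Hs p); rewrite inE eqxx => /(_ isT)].
apply: RS_sum => p ps.
have [r [L [HL e]]] := MR2 p.2 p.1.
have -> : iota p.1 * mon p.2 = mon p.2 * iota r - L by rewrite e addrK.
apply: RSD; first exact: RS_term.
apply: RSN; apply: IH; apply: span_mono HL => g /leq_trans; apply.
by have := Hs p ps.
Qed.

End Core.
Section NoethOre.
Local Open Scope ring_scope.
Variable D : nzRingType.
Hypothesis domD : is_domain D.

Lemma ore_chain (a b : D) : a != 0 -> b != 0 -> forall N (s : nat -> D),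
  (exists i, (i <= N)%N /\ s i != 0) ->
  \sum_(i < N.+1) s i * (b * a ^+ i) = 0 ->
  exists p q : D, p <> 0 /\ p * a = q * b.
Proof.
move=> na nb; elim=> [|N IH] s [i0 [i0N ns]] H.
  move: i0N ns; rewrite leqn0 => /eqP ->  ns.
  move: H; rewrite big_ord1 expr0 mulr1 => /domD [] e; move: ns nb; by rewrite e eqxx.
rewrite big_ord_recl /= expr0 mulr1 in H.
set P := \sum_(i < N.+1) s i.+1 * (b * a ^+ i).
have EP : \sum_(i < N.+1) s (bump 0 i) * (b * a ^+ (bump 0 i)) = P * a.
  rewrite /P mulr_suml; apply: eq_bigr => i _.
  by rewrite /bump /= add1n exprSr !mulrA.
rewrite EP in H.
case: (eqVneq P 0) => [P0|nP].
  rewrite P0 mul0r addr0 in H.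
  have s0 : s 0%N = 0 by case: (domD H) => // e; move: nb; rewrite e eqxx.
  apply: (IH (fun i => s i.+1)) => //.
  case: i0 i0N ns => [|i] iN ns; first by move: ns; rewrite s0 eqxx.
  by exists i; split.
exists P, (- s 0%N); split; first by apply/eqP.
by apply/eqP; rewrite mulNr -subr_eq0 opprK addrC H.
Qed.

Lemma noeth_ore : left_noetherian D ->
  forall a b : D, b != 0 -> exists p q : D, p <> 0 /\ p * a = q * b.
Proof.
move=> HN a b nb.
case: (eqVneq a 0) => [->|na].
  by exists 1, 0; split; [apply/eqP; exact: oner_neq0 | rewrite mulr0 mul0r].
pose I k (y : D) := exists r : nat -> D, y = \sum_(i < k) r i * (b * a ^+ i).
have HI : forall k, left_ideal (I k).
  move=> k; split; [|split].
  - by exists (fun _ => 0); rewrite big1 // => i _; rewrite mul0r.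
  - move=> y z [r1 ->] [r2 ->]; exists (fun i => r1 i + r2 i).
    by rewrite -big_split; apply: eq_bigr => i _; rewrite mulrDl.
  - move=> c y [r ->]; exists (fun i => c * r i).
    by rewrite mulr_sumr; apply: eq_bigr => i _; rewrite mulrA.
have Hinc : forall k y, I k y -> I k.+1 y.
  move=> k y [r ->]; exists (fun i => if (i < k)%N then r i else 0).
  rewrite big_ord_recr /= ltnn mul0r addr0; apply: eq_bigr => i _.
  by rewrite ltn_ord.
have [N HNN] := HN I HI Hinc.
have : I N.+1 (b * a ^+ N).
  exists (fun i => if i == N then 1 else 0).
  rewrite big_ord_recr /= eqxx mul1r big1 ?add0r // => i _.
  by rewrite (ltn_eqF (ltn_ord i)) mul0r.
move=> /(HNN N.+1 (leqnSn N)) [r e].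
apply: (@ore_chain a b na nb N (fun i => if (i < N)%N then r i else -1)).
  by exists N; split=> //; rewrite ltnn oppr_eq0 oner_neq0.
rewrite big_ord_recr /= ltnn e mulN1r.
rewrite [X in X + _](eq_bigr (fun i : 'I_N => r i * (b * a ^+ i))) ?subrr //.
by move=> i _; rewrite ltn_ord.
Qed.
End NoethOre.
Section StdMon.
Local Open Scope ring_scope.
Variable A : nzRingType.

Lemma monomial_recl n (x : 'I_n.+1 -> A) (g : {ffun 'I_n.+1 -> nat}) :
  monomial x g = x ord0 ^+ g ord0 *
    monomial (fun k => x (lift ord0 k)) [ffun k => g (lift ord0 k)].
Proof. by rewrite /monomial big_ord_recl; congr (_ * _); apply: eq_bigr => k _; rewrite ffunE. Qed.

Lemma monomial_recr n (x : 'I_n.+1 -> A) (g : {ffun 'I_n.+1 -> nat}) :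
  monomial x g = monomial (fun k => x (widen_ord (leqnSn n) k))
                   [ffun k => g (widen_ord (leqnSn n) k)] * x ord_max ^+ g ord_max.
Proof. by rewrite /monomial big_ord_recr; congr (_ * _); apply: eq_bigr => k _; rewrite ffunE. Qed.

Lemma monomial0 n (x : 'I_n -> A) : monomial x (m0 n) = 1.
Proof. by rewrite /monomial big1 // => k _; rewrite ffunE expr0. Qed.

Lemma monP1 n (x : 'I_n -> A) (i : 'I_n) (g : {ffun 'I_n -> nat}) :
  (forall k : 'I_n, (k < i)%N -> g k = 0%N) ->
  x i * monomial x g = monomial x (madd g (me i)).
Proof.
elim: n x i g => [|n IH] x i g H; first by move: (ltn_ord i).
rewrite !monomial_recl.
case: (unliftP ord0 i) => [i' ei|ei]; subst i.
- have g0 : g ord0 = 0%N by apply: H; rewrite lift0.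
  rewrite !ffunE g0 /= !expr0 !mul1r.
  have -> : [ffun k => madd g (me (lift ord0 i')) (lift ord0 k)] =
            madd [ffun k => g (lift ord0 k)] (me i').
    by apply/ffunP => k; rewrite !ffunE (inj_eq (@lift_inj _ ord0)).
  apply: IH => k ki; rewrite ffunE; apply: H; by rewrite lift0 ltnS.
- rewrite mulrA -exprS !ffunE eqxx addn1; congr (_ * monomial _ _).
  by apply/ffunP => k; rewrite !ffunE [lift _ _ == _]eq_sym (negbTE (neq_lift _ _)) addn0.
Qed.

Lemma monP2 n (x : 'I_n -> A) (L : 'I_n) (g : {ffun 'I_n -> nat}) :
  (forall k : 'I_n, (L < k)%N -> g k = 0%N) ->
  monomial x g * x L = monomial x (madd g (me L)).
Proof.
elim: n x L g => [|n IH] x L g H; first by move: (ltn_ord L).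
rewrite !monomial_recr.
case: (eqVneq L ord_max) => [->|nL].
- rewrite -mulrA -exprSr !ffunE eqxx addn1; congr (monomial _ _ * _).
  apply/ffunP => k; rewrite !ffunE.
  have -> : (widen_ord (leqnSn n) k == ord_max) = false.
    by apply/negbTE; rewrite -(inj_eq val_inj) /= neq_ltn ltn_ord.
  by rewrite addn0.
- have Ln : (L < n)%N by move: (ltn_ord L) nL; rewrite ltnS leq_eqVlt => /orP [/eqP e|//]; rewrite -(inj_eq val_inj) /= e eqxx.
  set L' := Ordinal Ln.
  have eL : L = widen_ord (leqnSn n) L' by apply: val_inj.
  have gm : g ord_max = 0%N by apply: H.
  rewrite !ffunE gm eq_sym (negbTE nL) /= !expr0 !mulr1.
  have -> : [ffun k => madd g (me L) (widen_ord (leqnSn n) k)] =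
            madd [ffun k => g (widen_ord (leqnSn n) k)] (me L').
    apply/ffunP => k; rewrite !ffunE eL; congr (_ + nat_of_bool _).
  rewrite eL; apply: IH => k kL; rewrite ffunE; apply: H; by rewrite eL.
Qed.
End StdMon.
Local Open Scope ring_scope.

Lemma grp_id (V : zmodType) (a P Q S : V) : a - P = a - (P - Q - S) - Q - S.
Proof. by rewrite !opprB !addrA [_ + Q - P]addrAC addrK addrAC addrK. Qed.

Definition revm n (g : {ffun 'I_n -> nat}) : {ffun 'I_n -> nat} := [ffun k => g (rev_ord k)].
Lemma revmK n : involutive (@revm n).
Proof. by move=> g; apply/ffunP => k; rewrite !ffunE rev_ordK. Qed.
Lemma revm_add n (g h : {ffun 'I_n -> nat}) : revm (madd g h) = madd (revm g) (revm h).
Proof. by apply/ffunP => k; rewrite !ffunE. Qed.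
Lemma revm_me n (i : 'I_n) : revm (me i) = me (rev_ord i).
Proof.
apply/ffunP => k; rewrite !ffunE; congr (nat_of_bool _).
by apply/eqP/eqP => [<-|->]; rewrite rev_ordK.
Qed.
Lemma revm0 n : revm (m0 n) = m0 n.
Proof. by apply/ffunP => k; rewrite !ffunE. Qed.
Lemma deg_revm n (g : {ffun 'I_n -> nat}) : deg (revm g) = deg g.
Proof.
rewrite /deg [in RHS](reindex_inj rev_ord_inj) /=.
by apply: eq_bigr => k _; rewrite ffunE.
Qed.

Theorem proposition3p1 (R A : nzRingType) (iota : {rmorphism R -> A})
    (n : nat) (x : 'I_n -> A) :
  is_domain R -> bijective_skew_PBW iota x ->
  (left_noetherian R -> left_ore_domain A) /\
  (right_noetherian R -> right_ore_domain A).
Proof.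
move=> domR [[iinj [gen0 [indep0 [rel3' rel4']]]] [[sig [del [rel3 sbij]]] _]].
have iD : forall r s : R, iota (r + s) = iota r + iota s by move=> r s; rewrite rmorphD.
have iM : forall r s : R, iota (r * s) = iota r * iota s by move=> r s; rewrite rmorphM.
have i1 : iota 1 = 1 by rewrite rmorph1.
have mS := @monP1 A n x.
have m0' := monomial0 x.
have sinj : forall i, injective (sig i) by move=> i; apply: bij_inj.
have mme : forall k, monomial x (me k) = x k.
  move=> k; have H : forall kk : 'I_n, (kk < k)%N -> m0 n kk = 0%N by move=> kk _; rewrite ffunE.
  by have := mS k _ H; rewrite m0' mulr1 madd0m.
have r4 : forall i j : 'I_n, (j < i)%N -> exists c, c != 0 /\
    spanP iota (monomial x) (fun g => (deg g <= 1)%N) (x i * x j - iota c * (x j * x i)).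
  move=> i j _; have [c [d0 [d [nc e]]]] := rel4' j i.
  exists c; split; first by apply/eqP.
  exists ((d0, m0 n) :: [seq (d k, me k) | k <- index_enum 'I_n]); split.
    move=> p; rewrite inE => /orP [/eqP -> | /mapP [k _ ->]] /=; by rewrite ?deg0 ?deg_me.
  rewrite mulrA e big_cons big_map /= m0' mulr1; congr (_ + _).
  by apply: eq_bigr => k _; rewrite mme.
have gen : forall a, spanP iota (monomial x) (fun _ => True) a.
  move=> a; have [s [c [_ ->]]] := gen0 a.
  by exists [seq (c al, al) | al <- s]; split => //; rewrite big_map.
split.
  move=> LN; apply: (core_left iD iM i1 indep0 mS m0' rel3 sinj domR r4 gen).
  move=> a b nb; have [p [q [np e]]] := noeth_ore domR LN a nb.
  by exists p, q; split => //; apply/eqP.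
move=> RN.
have sig0' : forall i, sig i 0 = 0 by move=> i; apply: sig0 => //; eassumption.
have sbij' : forall i, exists f, cancel (sig i) f /\ cancel f (sig i).
  by move=> i; case: (sbij i) => f h1 h2; exists f.
pose si i := proj1_sig (constructive_indefinite_description _ (sbij' i)).
have siP : forall i, cancel (sig i) (si i) /\ cancel (si i) (sig i).
  by move=> i; rewrite /si; case: constructive_indefinite_description.
have rel3r : forall i r, iota r * x i = x i * iota (si i r) - iota (del i (si i r)).
  by move=> i r; rewrite rel3 (proj2 (siP i)) addrK.
pose ic := fun r : R^c => (iota r : A^c).
pose y := fun k : 'I_n => (x (rev_ord k) : A^c).
pose monc := fun g : {ffun 'I_n -> nat} => (monomial x (revm g) : A^c).
pose sigc := fun (i : 'I_n) (r : R^c) => (si (rev_ord i) r : R^c).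
pose delc := fun (i : 'I_n) (r : R^c) => (- del (rev_ord i) (si (rev_ord i) r) : R^c).
have iDc : forall r s : R^c, ic (r + s) = ic r + ic s by move=> r s; exact: iD.
have iMc : forall r s : R^c, ic (r * s) = ic r * ic s by move=> r s; exact: (iM s r).
have i1c : ic 1 = 1 by exact: i1.
have indepc : forall (s : seq {ffun 'I_n -> nat}) (c : {ffun 'I_n -> nat} -> R^c), uniq s ->
    \sum_(al <- s) ic (c al) * monc al = 0 -> forall al, al \in s -> c al = 0.
  move=> s c us H al als.
  have H' : \sum_(al <- [seq revm g | g <- s]) monomial x al * iota (c (revm al)) = 0.
    by rewrite big_map; under eq_bigr => g _ do rewrite revmK; exact: H.
  have := right_indep iD iM i1 indep0 mS m0' rel3 sinj domR r4 _ H' (al := revm al).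
  rewrite revmK; apply; first by rewrite map_inj_uniq //; apply: can_inj (@revmK n).
  by apply/mapP; exists al.
have mSc : forall (i : 'I_n) (g : {ffun 'I_n -> nat}),
    (forall k : 'I_n, (k < i)%N -> g k = 0%N) -> y i * monc g = monc (madd g (me i)).
  move=> i g H; rewrite /y /monc /= revm_add revm_me.
  change (monomial x (revm g) * x (rev_ord i) = monomial x (madd (revm g) (me (rev_ord i)))).
  apply: monP2 => k ki; rewrite ffunE; apply: H.
  by move: ki (ltn_ord i) (ltn_ord k); rewrite /=; lia.
have m0c : monc (m0 n) = 1 by rewrite /monc revm0 m0'.
have rel3c : forall i (r : R^c), y i * ic r = ic (sigc i r) * y i + ic (delc i r).
  move=> i r; change (iota r * x (rev_ord i) = x (rev_ord i) * iota (si (rev_ord i) r)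
     + iota (- del (rev_ord i) (si (rev_ord i) r))).
  by rewrite rel3r rmorphN.
have sinjc : forall i, injective (sigc i).
  by move=> i; apply: (can_inj (proj2 (siP (rev_ord i)))).
have domRc : is_domain R^c.
  by move=> a b /domR [] ->; [right|left].
pose RS1 (a : A) := exists s : seq (R * {ffun 'I_n -> nat}),
  (forall p, p \in s -> (deg p.2 <= 1)%N) /\ a = \sum_(p <- s) monomial x (revm p.2) * iota p.1.
have RS1D : forall a b, RS1 a -> RS1 b -> RS1 (a + b).
  move=> a b [s1 [H1 ->]] [s2 [H2 ->]]; exists (s1 ++ s2); split; last by rewrite big_cat.
  by move=> p; rewrite mem_cat => /orP [/H1|/H2].
have RS1N : forall a, RS1 a -> RS1 (- a).
  move=> a [s [H ->]]; exists [seq (- p.1, p.2) | p <- s]; split.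
    by move=> p /mapP [q /H qs ->].
  by rewrite big_map -sumrN; apply: eq_bigr => p _; rewrite /= rmorphN mulrN.
have RS1c : forall r, RS1 (iota r).
  move=> r; exists [:: (r, m0 n)]; split; first by move=> p; rewrite inE => /eqP ->; rewrite deg0.
  by rewrite big_seq1 /= revm0 m0' mul1r.
have RS1xr : forall k r, RS1 (x k * iota r).
  move=> k r; exists [:: (r, me (rev_ord k))]; split.
    by move=> p; rewrite inE => /eqP ->; rewrite deg_me.
  by rewrite big_seq1 /= revm_me rev_ordK mme.
have RS1rx : forall k r, RS1 (iota r * x k).
  by move=> k r; rewrite rel3r; apply: (RS1D); [apply: (RS1xr)|apply: (RS1N); apply: (RS1c)].
have r4c : forall i j : 'I_n, (j < i)%N -> exists c : R^c, c != 0 /\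
    spanP ic monc (fun g => (deg g <= 1)%N) (y i * y j - ic c * (y j * y i)).
  move=> i j ji.
  set I := rev_ord i; set J := rev_ord j.
  have IJ : (I < J)%N by rewrite /I /J /=; move: ji (ltn_ord i); lia.
  have [c [d0 [d [nc e]]]] := rel4' I J.
  set u := si I c; set w := si J u.
  have e1 : iota c * x I = x I * iota u - iota (del I u).
    by rewrite rel3r.
  have e2 : iota u * x J = x J * iota w - iota (del J w).
    by rewrite rel3r.
  have e12 : iota c * x I * x J = x I * x J * iota w - x I * iota (del J w) - iota (del I u) * x J.
    by rewrite e1 mulrBl -[x I * iota u * x J]mulrA e2 mulrBr mulrA.
  exists w; split.
    apply/eqP => w0; apply: nc.
    have u0 : u = 0 by rewrite -(proj2 (siP J) u) -/w w0 sig0'.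
    by rewrite -(proj2 (siP I) c) -/u u0 sig0'.
  have Hgoal : RS1 (x J * x I - x I * x J * iota w).
    rewrite (grp_id (x J * x I) _ (x I * iota (del J w)) (iota (del I u) * x J)) -e12.
    apply: (RS1D); last by apply: (RS1N); apply: (RS1rx).
    apply: (RS1D); last by apply: (RS1N); apply: (RS1xr).
    rewrite e; apply: (RS1D); first exact: (RS1c).
    rewrite -big_enum; apply: (fun H => H) ; elim: (enum 'I_n) => [|k s IH].
      by rewrite big_nil; exact: (RS1c 0) || (rewrite -(rmorph0 iota); exact: (RS1c)).
    by rewrite big_cons; apply: (RS1D) => //; apply: (RS1rx).
  have [s [Hs es]] := Hgoal; by exists s; split.
have genc : forall a : A^c, spanP ic monc (fun _ => True) a.
  move=> a.
  have [s es] := right_gen iD iM i1 indep0 mS m0' rel3 sinj domR r4 gen sbij a.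
  exists [seq (p.1, revm p.2) | p <- s]; split => //.
  rewrite big_map; rewrite es; apply: eq_bigr => p _.
  by rewrite /ic /monc /= revmK.
have oreRc : forall a b : R^c, b != 0 -> exists p q : R^c, p != 0 /\ p * a = q * b.
  move=> a b nb; have [p [q [np e]]] := @noeth_ore (R^c) domRc RN a b nb.
  by exists p, q; split => //; apply/eqP.
have := core_left iDc iMc i1c indepc mSc m0c rel3c sinjc domRc r4c genc oreRc.
move=> [domc orec]; split.
  by move=> a b ab; case: (domc b a ab) => ->; [right|left].
exact: orec.
Qed.
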